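(* Let $(r_n)_{n\in\mathbb N}\subset L^0_+$ with $r_n\neq0$ for all $n$, and suppose that the set $\{\sup_{n\in\mathbb N}r_n>0\}$ is atomless (contains no atom of $\mathbb P$). Then there exists $r\in L^0_{++}$ such that $\mathbb P(r_n\ge r)>0$ for all $n\in\mathbb N$.
   Context: $(\Omega,\mathcal F,\mathbb P)$ is a probability space, $L^0$ the real-valued measurable functions modulo a.e. equality with a.e. order, $L^0_+=\{r\ge0\}$, $L^0_{++}=\{r>0\text{ a.e.}\}$; $\sup$ denotes the essential supremum. $r_n\ne0$ means $\mathbb P(r_n\ne 0)>0$. *)

(* Defs.v *)
From Stdlib Require Import Reals.
Open Scope R_scope.

Definition event (Omega : Type) := Omega -> Prop.

Record ProbSpace (Omega : Type) := {
  meas : event Omega -> Prop;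
  prob : event Omega -> R;
  meas_full : meas (fun _ => True);
  meas_compl : forall A, meas A -> meas (fun w => ~ A w);
  meas_cunion : forall A : nat -> event Omega,
      (forall n, meas (A n)) -> meas (fun w => exists n, A n w);
  prob_nonneg : forall A, meas A -> 0 <= prob A;
  prob_full : prob (fun _ => True) = 1;
  prob_sigma_additive : forall A : nat -> event Omega,
      (forall n, meas (A n)) ->
      (forall m n, m <> n -> forall w, A m w -> A n w -> False) ->
      Un_cv (fun N => sum_f_R0 (fun n => prob (A n)) N)
            (prob (fun w => exists n, A n w))
}.

Arguments meas {Omega} _ _.
Arguments prob {Omega} _ _.

(* F-measurable real random variables (elements of L^0, via representatives). *)
Definition measurable_fun {Omega : Type} (PS : ProbSpace Omega) (f : Omega -> R) : Prop :=
  forall a : R, meas PS (fun w => f w <= a).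

Definition is_atom {Omega : Type} (PS : ProbSpace Omega) (A : event Omega) : Prop :=
  meas PS A /\ 0 < prob PS A /\
  forall B, meas PS B -> (forall w, B w -> A w) ->
            prob PS B = 0 \/ prob PS B = prob PS A.

Definition atomless {Omega : Type} (PS : ProbSpace Omega) (S : event Omega) : Prop :=
  ~ exists A, is_atom PS A /\ (forall w, A w -> S w).

(* Main.v *)
Require Import Defs.
From Stdlib Require Import Reals Lra Lia Classical FunctionalExtensionality PropExtensionality ConstructiveEpsilon ClassicalEpsilon.
Open Scope R_scope.

Lemma ev_ext {Omega} (A B : event Omega) : (forall w, A w <-> B w) -> A = B.
Proof. intro H; apply functional_extensionality; intro w; apply propositional_extensionality; auto. Qed.

Lemma meas_ext {Omega} (PS : ProbSpace Omega) (A B : event Omega) :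
  (forall w, A w <-> B w) -> meas PS A -> meas PS B.
Proof. intros H; rewrite (ev_ext A B H); auto. Qed.

Lemma prob_ext {Omega} (PS : ProbSpace Omega) (A B : event Omega) :
  (forall w, A w <-> B w) -> prob PS A = prob PS B.
Proof. intros H; rewrite (ev_ext A B H); auto. Qed.

Lemma meas_empty {Omega} (PS : ProbSpace Omega) : meas PS (fun _ => False).
Proof. apply (meas_ext PS (fun w => ~ True)); [tauto|]. apply meas_compl, meas_full. Qed.

Lemma meas_or {Omega} (PS : ProbSpace Omega) A B :
  meas PS A -> meas PS B -> meas PS (fun w => A w \/ B w).
Proof.
  intros HA HB.
  apply (meas_ext PS (fun w => exists n, (match n with 0%nat => A | _ => B end) w)).
  - intro w; split. intros [[|n] H]; auto. intros [H|H]; [exists 0%nat|exists 1%nat]; auto.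
  - apply meas_cunion. intros [|n]; auto.
Qed.

Lemma meas_and {Omega} (PS : ProbSpace Omega) A B :
  meas PS A -> meas PS B -> meas PS (fun w => A w /\ B w).
Proof.
  intros HA HB.
  apply (meas_ext PS (fun w => ~ (~ A w \/ ~ B w))). { intro w; tauto. }
  apply meas_compl, meas_or; apply meas_compl; auto.
Qed.

Lemma meas_cinter {Omega} (PS : ProbSpace Omega) (A : nat -> event Omega) :
  (forall n, meas PS (A n)) -> meas PS (fun w => forall n, A n w).
Proof.
  intros HA.
  apply (meas_ext PS (fun w => ~ exists n, ~ A n w)).
  { intro w; split. intros H n. apply NNPP; intro; apply H; eauto. intros H [n Hn]; auto. }
  apply meas_compl, meas_cunion; intro; apply meas_compl; auto.
Qed.

Lemma meas_constand {Omega} (PS : ProbSpace Omega) (P : Prop) A :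
  meas PS A -> meas PS (fun w => P /\ A w).
Proof.
  intros HA. destruct (classic P) as [HP|HP].
  - apply (meas_ext PS A); [intro; tauto|auto].
  - apply (meas_ext PS (fun _ => False)); [intro; tauto| apply meas_empty].
Qed.

Lemma sum_const (p : R) N : sum_f_R0 (fun _ => p) N = INR (S N) * p.
Proof. induction N; simpl sum_f_R0. simpl; ring. rewrite IHN, !S_INR; ring. Qed.

Lemma prob_empty {Omega} (PS : ProbSpace Omega) : prob PS (fun _ => False) = 0.
Proof.
  set (p := prob PS (fun _ => False)).
  assert (H := prob_sigma_additive _ PS (fun _ => fun _ => False) (fun _ => meas_empty PS)
     (fun m n _ w H _ => H)). cbv beta in H.
  rewrite (prob_ext PS (fun w => exists _ : nat, False) (fun _ => False)) in H
    by (intro; split; [intros [_ H']; auto | tauto]).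
  fold p in H.
  assert (Hp : 0 <= p) by (apply prob_nonneg, meas_empty).
  destruct (Rle_lt_or_eq_dec _ _ Hp) as [Hlt|]; auto.
  destruct (H p Hlt) as [N0 HN].
  specialize (HN (S N0) ltac:(lia)). rewrite sum_const in HN.
  unfold Rdist in HN.
  assert (INR (S (S N0)) >= 2). { rewrite !S_INR. pose proof (pos_INR N0). lra. }
  rewrite Rabs_right in HN; nra.
Qed.

Lemma Un_cv_ev_const (u : nat -> R) c : (forall N, (1 <= N)%nat -> u N = c) -> Un_cv u c.
Proof.
  intros H e He. exists 1%nat. intros n Hn. rewrite H by lia. unfold Rdist.
  rewrite Rminus_diag, Rabs_R0; auto.
Qed.

Lemma prob_add {Omega} (PS : ProbSpace Omega) A B :
  meas PS A -> meas PS B -> (forall w, A w -> B w -> False) ->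
  prob PS (fun w => A w \/ B w) = prob PS A + prob PS B.
Proof.
  intros HA HB Hd.
  set (F := fun n => match n with 0%nat => A | 1%nat => B | _ => fun _ : Omega => False end).
  assert (HF : forall n, meas PS (F n)) by (intros [|[|n]]; simpl; auto using meas_empty).
  assert (Hdis : forall m n, m <> n -> forall w, F m w -> F n w -> False).
  { intros [|[|m]] [|[|n]] Hmn w; simpl; try tauto; try lia; eauto. }
  pose proof (prob_sigma_additive _ PS F HF Hdis) as H.
  rewrite (prob_ext PS (fun w => exists n, F n w) (fun w => A w \/ B w)) in H.
  2:{ intro w; split. intros [[|[|n]] Hn]; simpl in Hn; tauto.
      intros [H'|H']; [exists 0%nat|exists 1%nat]; auto. }
  apply (UL_sequence _ _ _ H). apply Un_cv_ev_const.
  intros N HN. destruct N as [|N]; [lia|]. clear HN. induction N.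
  - simpl. ring.
  - rewrite tech5, IHN. simpl. rewrite prob_empty. ring.
Qed.

Lemma prob_mono {Omega} (PS : ProbSpace Omega) A B :
  meas PS A -> meas PS B -> (forall w, A w -> B w) -> prob PS A <= prob PS B.
Proof.
  intros HA HB Hs.
  rewrite (prob_ext PS B (fun w => A w \/ (B w /\ ~ A w))).
  2:{ intro w; split; [|intros [H|[H _]]; auto]. intro; destruct (classic (A w)); auto. }
  rewrite prob_add; auto. 2: apply meas_and; auto; apply meas_compl; auto.
  2: intros w ? [? ?]; auto.
  pose proof (prob_nonneg _ PS (fun w => B w /\ ~ A w) (meas_and PS _ _ HB (meas_compl _ PS _ HA))). lra.
Qed.

Lemma prob_compl {Omega} (PS : ProbSpace Omega) A :
  meas PS A -> prob PS (fun w => ~ A w) = 1 - prob PS A.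
Proof.
  intros HA. rewrite <- (prob_full _ PS).
  rewrite (prob_ext PS (fun _ => True) (fun w => A w \/ ~ A w)) by (intro; tauto).
  rewrite prob_add; auto. ring. apply meas_compl; auto.
Qed.

Lemma prob_le1 {Omega} (PS : ProbSpace Omega) A : meas PS A -> prob PS A <= 1.
Proof.
  intros HA. rewrite <- (prob_full _ PS). apply prob_mono; auto. apply meas_full.
Qed.

Lemma exists_least (P : nat -> Prop) : (exists n, P n) -> exists n, P n /\ forall j, (j < n)%nat -> ~ P j.
Proof.
  intros [n Hn]. revert Hn. induction n as [n IH] using (well_founded_induction Wf_nat.lt_wf).
  intros Hn. destruct (classic (exists j, (j < n)%nat /\ P j)) as [[j [Hj Pj]]|Hno].
  - apply (IH j Hj Pj).
  - exists n; split; auto. intros j Hj Pj; apply Hno; eauto.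
Qed.

Lemma prob_subadd {Omega} (PS : ProbSpace Omega) (A : nat -> event Omega) c :
  (forall n, meas PS (A n)) ->
  (forall N, sum_f_R0 (fun n => prob PS (A n)) N <= c) ->
  prob PS (fun w => exists n, A n w) <= c.
Proof.
  intros HA Hc.
  set (G := fun n w => A n w /\ ~ exists j, (j < n)%nat /\ A j w).
  assert (HG : forall n, meas PS (G n)).
  { intro n. apply meas_and; auto. apply meas_compl, meas_cunion. intro j. apply meas_constand; auto. }
  assert (Hdis : forall m n, m <> n -> forall w, G m w -> G n w -> False).
  { intros m n Hmn w [Hm Hm'] [Hn Hn']. destruct (Nat.lt_gt_cases m n) as [[H1|H1] _]; [auto| |]; eauto. }
  pose proof (prob_sigma_additive _ PS G HG Hdis) as H.
  rewrite (prob_ext PS (fun w => exists n, G n w) (fun w => exists n, A n w)) in H.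
  2:{ intro w; split. intros [n [Hn _]]; eauto.
      intros Hex. destruct (exists_least _ Hex) as [n [Hn Hl]]. exists n. split; auto.
      intros [j [Hj Aj]]. apply (Hl j Hj Aj). }
  refine (@Rle_cv_lim _ (fun _ => c) _ c _ H _).
  2: apply Un_cv_ev_const; auto.
  intro N. eapply Rle_trans; [|apply (Hc N)]. apply sum_Rle.
  intros n _. apply prob_mono; auto. intros w [? _]; auto.
Qed.

Lemma halving {Omega} (PS : ProbSpace Omega) (S E : event Omega) :
  atomless PS S -> meas PS E -> (forall w, E w -> S w) -> 0 < prob PS E ->
  forall m, exists D, meas PS D /\ (forall w, D w -> E w) /\ 0 < prob PS D /\
     prob PS D <= prob PS E * (/2)^m.
Proof.
  intros Hat HE HES HpE m. induction m as [|m IH].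
  - exists E. simpl. repeat split; auto. lra.
  - destruct IH as [D [HD [HDE [HpD HDle]]]].
    destruct (classic (exists B, meas PS B /\ (forall w, B w -> D w) /\
                 prob PS B <> 0 /\ prob PS B <> prob PS D)) as [[B [HB [HBD [HB0 HB1]]]]|Hno].
    + assert (HpB := prob_nonneg _ PS B HB).
      assert (HBle := prob_mono PS B D HB HD HBD).
      assert (HC : meas PS (fun w => D w /\ ~ B w)) by (apply meas_and; auto; apply meas_compl; auto).
      assert (Hsum : prob PS D = prob PS B + prob PS (fun w => D w /\ ~ B w)).
      { rewrite <- prob_add; auto. apply prob_ext. intro w; split; [|intros [H|[H _]]; auto].
        intro; destruct (classic (B w)); auto. intros w ? [? ?]; auto. }
      assert (Hpos2 : 0 < (/2)^m) by (apply pow_lt; lra).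
      simpl. destruct (Rle_lt_dec (prob PS B) (prob PS D / 2)).
      * exists B. repeat split; auto. lra. nra.
      * exists (fun w => D w /\ ~ B w). repeat split; auto. intros w [Hw _]; auto. lra. nra.
    + exfalso. apply Hat. exists D. split; [|auto].
      split; [auto|split; [auto|]]. intros B HB HBD.
      destruct (Req_dec (prob PS B) 0); auto. destruct (Req_dec (prob PS B) (prob PS D)); auto.
      exfalso; apply Hno; exists B; auto.
Qed.

Lemma meas_gt {Omega} (PS : ProbSpace Omega) f c :
  measurable_fun PS f -> meas PS (fun w => c < f w).
Proof.
  intros Hf. apply (meas_ext PS (fun w => ~ f w <= c)). intro; lra.
  apply meas_compl, Hf.
Qed.

Lemma meas_ge {Omega} (PS : ProbSpace Omega) f c :
  measurable_fun PS f -> meas PS (fun w => c <= f w).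
Proof.
  intros Hf. apply (meas_ext PS (fun w => ~ exists j, f w <= c - / INR (S j))).
  - intro w; split.
    + intro H. apply Rnot_lt_le. intro Hlt.
      destruct (archimed_cor1 (c - f w)) as [N [HN HN0]]; [lra|].
      apply H. exists (pred N). replace (S (pred N)) with N by lia. lra.
    + intros H [j Hj]. assert (0 < / INR (S j)) by (apply Rinv_0_lt_compat, lt_0_INR; lia). lra.
  - apply meas_compl, meas_cunion. intro j; apply Hf.
Qed.

Definition s_of {Omega} (T : nat -> event Omega) (eps : nat -> R) (w : Omega) : R :=
  match excluded_middle_informative (exists m, ~ T m w) with
  | left H => eps (proj1_sig (epsilon_smallest (fun m => ~ T m w)
                     (fun m => excluded_middle_informative _) H))
  | right _ => 0
  end.

Lemma s_spec {Omega} (T : nat -> event Omega) eps w :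
  (exists m, ~ T m w /\ (forall k, (k < m)%nat -> T k w) /\ s_of T eps w = eps m) \/
  ((forall m, T m w) /\ s_of T eps w = 0).
Proof.
  unfold s_of. destruct (excluded_middle_informative _) as [H|H].
  - left. destruct (epsilon_smallest _ _ H) as [m [Hm Hl]]; simpl.
    exists m. repeat split; auto. intros k Hk. apply NNPP; intro Hn. specialize (Hl k Hn). lia.
  - right. split; auto. intro m; apply NNPP; intro; apply H; eauto.
Qed.

Lemma least_unique {Omega} (T : nat -> event Omega) w m n :
  ~ T m w -> (forall k, (k < m)%nat -> T k w) ->
  ~ T n w -> (forall k, (k < n)%nat -> T k w) -> m = n.
Proof.
  intros H1 H2 H3 H4. destruct (Nat.lt_trichotomy m n) as [h|[h|h]]; auto.
  - exfalso; apply H1, H4, h.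
  - exfalso; apply H3, H2, h.
Qed.

Lemma meas_s_le {Omega} (PS : ProbSpace Omega) (T : nat -> event Omega) eps g :
  (forall m, meas PS (T m)) -> (forall c, meas PS (fun w => c <= g w)) ->
  meas PS (fun w => s_of T eps w <= g w).
Proof.
  intros HT Hg.
  apply (meas_ext PS (fun w => (exists m, ((~ T m w /\ (forall k, (k < m)%nat -> T k w))
                                      /\ eps m <= g w))
                           \/ ((forall m, T m w) /\ 0 <= g w))).
  - intro w. destruct (s_spec T eps w) as [[m [H1 [H2 H3]]]|[H1 H3]]; rewrite H3; split.
    + intros [[n [[Hn1 Hn2] Hn3]]|[Ha _]].
      * rewrite (least_unique T w m n); auto.
      * exfalso; auto.
    + intro; left; exists m; auto.
    + intros [[n [[Hn1 _] _]]|[_ Ha]]; auto. exfalso; auto.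
    + intro; right; auto.
  - apply meas_or.
    + apply meas_cunion. intro m. apply meas_and.
      * apply meas_and; [apply meas_compl; auto|].
        apply (meas_cinter PS (fun k w => (k < m)%nat -> T k w)). intro k.
        destruct (classic (k < m)%nat).
        -- apply (meas_ext PS (T k)); auto. intro; tauto.
        -- apply (meas_ext PS (fun _ => True)); [intro; tauto|apply meas_full].
      * apply Hg.
    + apply meas_and; [apply meas_cinter; auto| apply Hg].
Qed.

Fixpoint epsf (d : nat -> R) (n : nat) : R :=
  match n with 0%nat => d 0%nat | S m => Rmin (epsf d m) (d (S m)) end.

Lemma epsf_pos d : (forall k, 0 < d k) -> forall n, 0 < epsf d n.
Proof. intros H n; induction n; simpl; auto. apply Rmin_glb_lt; auto. Qed.

Lemma epsf_le d n : epsf d n <= d n.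
Proof. destruct n; simpl. lra. apply Rmin_r. Qed.

Lemma epsf_anti d m n : (m <= n)%nat -> epsf d n <= epsf d m.
Proof.
  intro H; induction H. lra. simpl. eapply Rle_trans; [apply Rmin_l|auto].
Qed.

Lemma geo N : sum_f_R0 (fun n => (/2)^n) N = 2 - (/2)^N.
Proof. induction N; simpl sum_f_R0. simpl; lra. rewrite IHN. simpl. lra. Qed.

Theorem lemma5p1 (Omega : Type) (PS : ProbSpace Omega) (r : nat -> Omega -> R)
  (Hmeas : forall n, measurable_fun PS (r n))
  (Hpos : forall n, prob PS (fun w => 0 <= r n w) = 1)
  (Hnz : forall n, 0 < prob PS (fun w => r n w <> 0))
  (Hatomless : atomless PS (fun w => exists n, 0 < r n w)) :
  exists s : Omega -> R,
    measurable_fun PS s /\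
    prob PS (fun w => 0 < s w) = 1 /\
    forall n, 0 < prob PS (fun w => s w <= r n w).
Proof.
  assert (Hdelta : forall k, exists dl, 0 < dl /\ 0 < prob PS (fun w => dl < r k w)).
  { intro k.
    assert (Hp0 : 0 < prob PS (fun w => 0 < r k w)).
    { assert (M1 := meas_gt PS (r k) 0 (Hmeas k)).
      assert (M2 := meas_ge PS (r k) 0 (Hmeas k)).
      assert (Hle : prob PS (fun w => r k w <> 0) <= prob PS (fun w => 0 < r k w \/ ~ 0 <= r k w)).
      { apply prob_mono.
        - apply (meas_ext PS (fun w => ~ (r k w <= 0 /\ 0 <= r k w))). intro; lra.
          apply meas_compl, meas_and; auto. apply Hmeas.
        - apply meas_or; auto. apply meas_compl; auto.
        - intros w Hw. lra. }
      rewrite prob_add in Hle; auto. 2: apply meas_compl; auto. 2: intros w; lra.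
      rewrite (prob_compl PS (fun w => 0 <= r k w)), Hpos in Hle; auto. specialize (Hnz k). lra. }
    apply NNPP; intro Hno.
    assert (Hz : forall j, prob PS (fun w => / INR (S j) < r k w) = 0).
    { intro j. assert (Hj : 0 < / INR (S j)) by (apply Rinv_0_lt_compat, lt_0_INR; lia).
      pose proof (prob_nonneg _ PS _ (meas_gt PS (r k) (/ INR (S j)) (Hmeas k))).
      destruct (Rle_lt_or_eq_dec _ _ H); auto. exfalso; apply Hno; eauto. }
    assert (Hsub := prob_subadd PS (fun j w => / INR (S j) < r k w) 0
                      (fun j => meas_gt PS _ _ (Hmeas k))).
    assert (Hm : prob PS (fun w => 0 < r k w) <= prob PS (fun w => exists j, / INR (S j) < r k w)).
    { apply prob_mono. apply meas_gt, Hmeas. apply meas_cunion; intro; apply meas_gt, Hmeas.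
      intros w Hw. destruct (archimed_cor1 (r k w)) as [N [HN HN0]]; auto.
      exists (pred N). replace (S (pred N)) with N by lia. auto. }
    assert (prob PS (fun w => exists j, / INR (S j) < r k w) <= 0).
    { apply Hsub. intro N. rewrite (sum_eq _ (fun _ => 0)) by (intros; apply Hz).
      rewrite sum_const; lra. }
    lra. }
  destruct (constructive_indefinite_description _
    (ClassicalEpsilon.choice (fun k dl => 0 < dl /\ 0 < prob PS (fun w => dl < r k w)) Hdelta))
    as [d Hd].
  clear Hdelta.
  set (E := fun k w => d k < r k w).
  assert (HD : forall k, exists D, meas PS D /\ (forall w, D w -> E k w) /\ 0 < prob PS D
                  /\ prob PS D <= (/2)^k).
  { intro k. destruct (Hd k) as [Hdk HpE].
    assert (HEm : meas PS (E k)) by (apply meas_gt, Hmeas).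
    destruct (halving PS _ (E k) Hatomless HEm) with (m := k) as [D [H1 [H2 [H3 H4]]]]; auto.
    { intros w Hw. exists k. unfold E in Hw. lra. }
    exists D. repeat split; auto. eapply Rle_trans; [apply H4|].
    rewrite <- (Rmult_1_l ((/2)^k)) at 2. apply Rmult_le_compat_r.
    apply pow_le; lra. apply prob_le1; auto. }
  destruct (ClassicalEpsilon.choice _ HD) as [D HDp]. clear HD.
  set (T := fun m w => exists j, D (m + j)%nat w).
  assert (HT : forall m, meas PS (T m)).
  { intro m; apply meas_cunion; intro j; apply HDp. }
  set (eps := epsf d).
  assert (Heps : forall n, 0 < eps n) by (apply epsf_pos; intro k; apply Hd).
  exists (s_of T eps). split; [|split].
  - intro a. apply (meas_s_le PS T eps (fun _ => a)); auto.
    intro c. destruct (classic (c <= a)).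
    + apply (meas_ext PS (fun _ => True)); [intro; tauto|apply meas_full].
    + apply (meas_ext PS (fun _ => False)); [intro; tauto|apply meas_empty].
  - assert (Hm0 : meas PS (fun w => 0 < s_of T eps w)).
    { apply (meas_ext PS (fun w => ~ s_of T eps w <= 0)). intro; lra.
      apply meas_compl. apply (meas_s_le PS T eps (fun _ => 0)); auto.
      intro c. destruct (classic (c <= 0)).
      + apply (meas_ext PS (fun _ => True)); [intro; tauto|apply meas_full].
      + apply (meas_ext PS (fun _ => False)); [intro; tauto|apply meas_empty]. }
    assert (Hlow : forall m, 1 - 2 * (/2)^m <= prob PS (fun w => 0 < s_of T eps w)).
    { intro m.
      assert (HTm : prob PS (T m) <= 2 * (/2)^m).
      { apply prob_subadd. intro; apply HDp. intro N.
        eapply Rle_trans. apply sum_Rle with (An := fun n => prob PS (D (m + n)%nat))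
                                           (Bn := fun n => (/2)^n * (/2)^m).
        intros n _. rewrite Rmult_comm, <- pow_add. apply HDp.
        rewrite <- scal_sum, geo. assert (0 < (/2)^m) by (apply pow_lt; lra).
        assert (0 < (/2)^N) by (apply pow_lt; lra). nra. }
      assert (prob PS (fun w => ~ T m w) <= prob PS (fun w => 0 < s_of T eps w)).
      { apply prob_mono; auto. apply meas_compl; auto.
        intros w Hw. destruct (s_spec T eps w) as [[m' [_ [_ H3]]]|[H1 _]].
        rewrite H3; auto. exfalso; auto. }
      rewrite prob_compl in H; auto. lra. }
    apply Rle_antisym. apply prob_le1; auto.
    apply Rnot_lt_le. intro Hlt.
    destruct (pow_lt_1_zero (/2)) with (y := (1 - prob PS (fun w => 0 < s_of T eps w)) / 2)
      as [N HN].
    { rewrite Rabs_right; lra. } { lra. }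
    specialize (HN N (le_n N)). specialize (Hlow N).
    rewrite Rabs_right in HN. lra. apply Rle_ge, pow_le; lra.
  - intro n. destruct (HDp n) as [HDm [HDE [HDpos _]]].
    eapply Rlt_le_trans; [apply HDpos|]. apply prob_mono; auto.
    + apply meas_s_le; auto. intro c; apply meas_ge, Hmeas.
    + intros w Hw. specialize (HDE w Hw). unfold E in HDE.
      destruct (Hd n) as [Hdn _].
      destruct (s_spec T eps w) as [[m [H1 [_ H3]]]|[_ H3]]; rewrite H3.
      * destruct (Compare_dec.le_lt_dec m n) as [Hmn|Hmn].
        -- exfalso. apply H1. exists (n - m)%nat. replace (m + (n - m))%nat with n by lia. auto.
        -- pose proof (epsf_anti d n m ltac:(lia)). pose proof (epsf_le d n).
           unfold eps. lra.
      * lra.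
Qed.
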